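(* Let $G$ be a simple graph of order $n$ and let $m\ge 1$. Let $M$ be a maximum matching of $G$, $\alpha'(G)=|M|$, and let $l=n-2\alpha'(G)$ be the number of vertices of $G$ not covered by $M$. Then $s(G\circ \overline{K_m})=\alpha'(G)+l$. In particular, if $G$ has a perfect matching, then $s(G\circ\overline{K_m})=n/2$.
   Context: A matching in a graph is a set of edges no two of which share a vertex; it is maximal if it is not properly contained in another matching, and maximum if it has the largest possible size. $\alpha'(G)$ is the size of a maximum matching of $G$. The saturation number $s(G)$ is the minimum cardinality of a maximal matching of $G$. $\overline{K_m}$ is the edgeless graph on $m$ vertices. The corona $G_1\circ G_2$ of graphs $G_1$ and $G_2$ is obtained by taking one copy of $G_1$ and $|V(G_1)|$ disjoint copies of $G_2$, and joining the $i$-th vertex of $G_1$ by an edge to every vertex of the $i$-th copy of $G_2$. *)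

(* Defs.v *)
(* Simple graphs as symmetric irreflexive relations on a finType. *)
From mathcomp Require Import all_boot.
Set Implicit Arguments. Unset Strict Implicit. Unset Printing Implicit Defensive.

Section Graphs.
Variable T : finType.
Variable e : rel T.

Definition edges : {set {set T}} := 
  [set f : {set T} | [exists x : T, exists y : T, e x y && (f == [set x; y])]].

Definition matching (M : {set {set T}}) : bool :=
  (M \subset edges) && trivIset M.

Definition maximal_matching (M : {set {set T}}) : bool :=
  matching M && [forall M' : {set {set T}}, (matching M' && (M \subset M')) ==> (M' == M)].

Definition matching_number : nat := \max_(M : {set {set T}} | matching M) #|M|.

(* s(G): minimum size of a maximal matching (a maximal matching always exists,
   and its size is at most #|T|, so #|T| is a harmless neutral element). *)
Definition saturation_number : nat :=
  \big[minn/#|T|]_(M : {set {set T}} | maximal_matching M) #|M|.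

Definition perfect_matching (M : {set {set T}}) : bool :=
  matching M && (cover M == [set: T]).

End Graphs.

(* Corona G o (complement of K_m): vertices of G are inl x, the i-th vertex of
   the copy attached to x is inr (x, i). *)
Definition corona_rel (T : finType) (e : rel T) (m : nat) : rel (T + (T * 'I_m))%type :=
  fun u v =>
    match u, v with
    | inl x, inl y => e x y
    | inl x, inr (y, _) => x == y
    | inr (x, _), inl y => x == y
    | inr _, inr _ => false
    end.
Arguments corona_rel {T} e m _ _.

(* Main.v *)
Require Import Defs.
From mathcomp Require Import all_boot zify.
Set Implicit Arguments. Unset Strict Implicit. Unset Printing Implicit Defensive.

Section Gen.
Variable V : finType.
Variable r : rel V.
Hypothesis r_irr : irreflexive r.

Lemma edgesP f : reflect (exists x y, r x y /\ f = [set x; y]) (f \in edges r).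
Proof.
rewrite /edges inE; apply: (iffP existsP) => [[x /existsP[y /andP[rxy /eqP ->]]]|[x [y [rxy ->]]]].
  by exists x, y.
by exists x; apply/existsP; exists y; rewrite rxy eqxx.
Qed.

Lemma matching_edge M f : matching r M -> f \in M -> exists x y, r x y /\ f = [set x; y].
Proof. by case/andP=> /subsetP sub _ /sub /edgesP. Qed.

Lemma card_cover_matching M : matching r M -> #|cover M| = 2 * #|M|.
Proof.
move=> mM; case/andP: (mM) => _ /eqP <-.
rewrite mulnC -sum_nat_const; apply: eq_bigr => f /(matching_edge mM) [x [y [rxy ->]]].
rewrite cards2; case: eqP => // exy; by rewrite exy r_irr in rxy.
Qed.

Lemma matching_le M : matching r M -> 2 * #|M| <= #|V|.
Proof. by move/card_cover_matching <-; apply: max_card. Qed.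

Lemma cover_meet_maximal M : matching r M ->
  (forall f, f \in edges r -> exists2 x, x \in f & x \in cover M) -> maximal_matching r M.
Proof.
move=> mM H; rewrite /maximal_matching mM /=; apply/forallP => M'; apply/implyP.
case/andP => mM' sub; rewrite eqEsubset andbC sub /=; apply/subsetP => f fM'.
case/andP: (mM') => /subsetP se tI.
have [x xf /bigcupP [g gM xg]] := H f (se f fM').
have gM' : g \in M' by apply: (subsetP sub).
case: (eqVneq f g) => [-> //|nfg].
have := (trivIsetP tI) f g fM' gM' nfg; rewrite -setI_eq0 => /eqP/setP/(_ x).
by rewrite !inE xf xg.
Qed.

Lemma maximal_meet M f : maximal_matching r M -> f \in edges r ->
  exists2 x, x \in f & x \in cover M.
Proof.
case/andP => mM /forallP maxM fE.
case: (eqVneq (f :&: cover M) set0); last first.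
  by case/set0Pn => x; rewrite inE => /andP[]; exists x.
move/eqP; rewrite setI_eq0 => dis.
have f0 : set0 \notin M.
  apply/negP => /(matching_edge mM) [x [y [_ /setP/(_ x)]]].
  by rewrite !inE eqxx.
case/andP: (mM) => /subsetP se tI.
have [tI' fnM] : trivIset (f |: M) /\ f \notin M.
  apply: trivIsetU1 => // B BM; apply: disjointWr dis.
  by apply/subsetP => y yB; apply/bigcupP; exists B.
have m' : matching r (f |: M).
  rewrite /matching tI' andbT; apply/subsetP => g /setU1P [->//|]; exact: se.
have := maxM (f |: M); rewrite m' subsetUr /= => /eqP E.
by move: fnM; rewrite -E setU11.
Qed.

End Gen.

Lemma disj_by (V : finType) (A B : {set V}) :
  (forall u, u \in A -> u \notin B) -> [disjoint A & B].
Proof. by move=> H; rewrite disjoints_subset; apply/subsetP => u /H; rewrite inE. Qed.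

Lemma arith_help a n : 2 * a <= n -> a + (n - 2 * a) = n - a.
Proof. lia. Qed.

Section Corona.
Variable T : finType.
Variable e : rel T.
Variable m : nat.
Hypothesis e_irr : irreflexive e.
Hypothesis m_pos : 0 < m.

Local Notation V := (T + T * 'I_m)%type.
Local Notation r := (corona_rel e m).
Local Notation inl := (@inl T (T * 'I_m)%type).
Local Notation inr := (@inr T (T * 'I_m)%type).

Definition o : 'I_m := Ordinal m_pos.

Lemma r_irr : irreflexive r.
Proof. by case=> [x|[x i]] //=; apply: e_irr. Qed.

Lemma inl_inj : injective inl.
Proof. by move=> x y [->]. Qed.

Lemma edge_has_inl f : f \in edges r -> exists x, inl x \in f.
Proof.
case/edgesP => [[a|[a i]] [[b|[b j]] [rab ->]]] //=.
- by exists a; rewrite !inE eqxx.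
- by exists a; rewrite !inE eqxx.
- by exists b; rewrite !inE eqxx orbT.
Qed.

Lemma inr_partner f x i : f \in edges r -> inr (x, i) \in f -> inl x \in f.
Proof.
case/edgesP => [[a|[a i']] [[b|[b j]] [rab ->]]] //=; rewrite !inE //=.
- by move: rab => /= /eqP -> /eqP [->]; rewrite eqxx.
- by move: rab => /= /eqP -> /orP[/eqP [->]|//]; rewrite eqxx.
Qed.

Lemma pair_edge x : [set inl x; inr (x, o)] \in edges r.
Proof. by apply/edgesP; exists (inl x), (inr (x, o)); split => //=. Qed.

Lemma max_covers M x : maximal_matching r M -> inl x \in cover M.
Proof.
move=> maxM; have [u] := maximal_meet maxM (pair_edge x).
rewrite !inE => /orP[/eqP -> //|/eqP ->] /bigcupP [g gM xg].
apply/bigcupP; exists g => //; apply: inr_partner xg.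
by case/andP: maxM => /andP[/subsetP se _] _; apply: se.
Qed.


Definition is_inl (u : V) : bool := if u is Datatypes.inl _ then true else false.
Definition L : {set V} := [set u : V | is_inl u].

Lemma subL_inr (f : {set V}) p : f \subset L -> inr p \notin f.
Proof. by move=> /subsetP s; apply/negP => /s; rewrite inE. Qed.

Lemma card_bigcup_le (M : {set {set V}}) (F : {set V} -> {set V}) :
  #|\bigcup_(f in M) F f| <= \sum_(f in M) #|F f|.
Proof.
apply: (big_ind2 (fun (S : {set V}) n => #|S| <= n)) => //.
- by rewrite cards0.
- move=> S1 n1 S2 n2 h1 h2; apply: leq_trans (leq_card_setU S1 S2) _.
  exact: leq_add.
Qed.

Lemma edge_bound (f : {set V}) : f \in edges r -> #|f :&: L| <= 1 + (if f \subset L then 1 else 0).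
Proof.
move=> fE; case: ifP => sub.
  apply: leq_trans (subset_leq_card (subsetIl f L)) _.
  by case/edgesP: fE => [u [v [_ ->]]]; rewrite cards2; case: (u != v).
case/edgesP: fE sub => [[a|[a i]] [[b|[b j]] [rab ->]]] //= sub.
- exfalso; move/negP: sub; apply; apply/subsetP => w.
  by rewrite !inE => /orP[]/eqP ->.
- rewrite addn0 -(cards1 (inl a)); apply: subset_leq_card; apply/subsetP => w.
  by rewrite !inE => /andP[/orP[//|/eqP ->]].
- rewrite addn0 -(cards1 (inl b)); apply: subset_leq_card; apply/subsetP => w.
  by rewrite !inE => /andP[/orP[/eqP ->|//]].
Qed.

Lemma lower M : maximal_matching r M -> #|T| <= #|M| + matching_number e.
Proof.
move=> maxM; have mM : matching r M by case/andP: maxM.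
case/andP: (mM) => /subsetP se tI.
pose A := [set f in M | f \subset L].
pose MG := (fun f : {set V} => inl @^-1: f) @: A.
have cardMG : #|MG| = #|A|.
  apply: card_in_imset => f1 f2; rewrite !inE => /andP[_ s1] /andP[_ s2] E.
  apply/setP => -[a|p].
  - by move/setP: E => /(_ a); rewrite !inE.
  - by rewrite (negbTE (subL_inr p s1)) (negbTE (subL_inr p s2)).
have mMG : matching e MG.
  apply/andP; split.
    apply/subsetP => g /imsetP [f]; rewrite inE => /andP[fM s] ->.
    move: (se f fM) s; case/edgesP => [[a|[a i]] [[b|[b j]] [rab ->]]] s.
    - apply/edgesP; exists a, b; split => //; apply/setP => w; by rewrite !inE.
    - by have := subL_inr (b, j) s; rewrite !inE eqxx orbT.
    - by have := subL_inr (a, i) s; rewrite !inE eqxx.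
    - by [].
  apply/trivIsetP => g1 g2 /imsetP [f1]; rewrite inE => /andP[f1M _] ->.
  move=> /imsetP [f2]; rewrite inE => /andP[f2M _] -> ne.
  have nf : f1 != f2 by apply: contraNneq ne => ->.
  have := (trivIsetP tI) f1 f2 f1M f2M nf.
  rewrite -!setI_eq0 -preimsetI => /eqP ->; by rewrite preimset0.
have A_le : #|A| <= matching_number e.
  by rewrite -cardMG; apply: (@leq_bigmax_cond _ (fun M => matching e M)).
suff : #|T| <= #|M| + #|A| by move=> h; apply: leq_trans h _; rewrite leq_add2l.
have -> : #|T| = #|inl @: [set: T]| by rewrite card_imset ?cardsT //; exact: inl_inj.
apply: (@leq_trans #|\bigcup_(f in M) (f :&: L)|).
  apply: subset_leq_card; apply/subsetP => u /imsetP [x _ ->].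
  have /bigcupP [g gM xg] := max_covers x maxM.
  by apply/bigcupP; exists g => //; rewrite !inE xg.
apply: leq_trans (card_bigcup_le _ _) _.
apply: (@leq_trans (\sum_(f in M) (1 + (if f \subset L then 1 else 0)))).
  by apply: leq_sum => f fM; apply: edge_bound; apply: se.
rewrite big_split /= sum1_card leq_add2l -big_mkcondr -sum1_card.
by apply: eq_leq; apply: eq_bigl => f; rewrite inE.
Qed.


Lemma max_matching_exists : exists2 M0, matching e M0 & #|M0| = matching_number e.
Proof.
have h : 0 < #|[pred M : {set {set T}} | matching e M]|.
  apply/card_gt0P; exists set0; rewrite inE /matching sub0set /=.
  by rewrite /trivIset /cover !big_set0 cards0.
have [M0 mM0 E] := eq_bigmax_cond (fun M : {set {set T}} => #|M|) h.
by exists M0 => //; rewrite /matching_number -E.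
Qed.

Lemma matching_number_le : 2 * matching_number e <= #|T|.
Proof. by have [M0 mM0 <-] := max_matching_exists; apply: matching_le mM0. Qed.

Lemma upper : exists2 M, maximal_matching r M & #|M| = #|T| - matching_number e.
Proof.
have [M0 mM0 E0] := max_matching_exists.
case/andP: (mM0) => /subsetP se0 tI0.
pose M1 := (fun f : {set T} => inl @: f) @: M0.
pose pr := fun x : T => [set inl x; inr (x, o)].
pose M2 := pr @: (~: cover M0).
have prinj : injective pr.
  move=> x y /setP /(_ (inl x)); rewrite !inE eqxx => /esym /orP [/eqP [] //|/eqP] //.
have covall : forall x, inl x \in cover (M1 :|: M2).
  move=> x; case: (boolP (x \in cover M0)) => [/bigcupP [g gM xg]|nx].
    apply/bigcupP; exists (inl @: g); first by rewrite inE; apply/orP; left; apply: imset_f.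
    by apply: imset_f.
  apply/bigcupP; exists (pr x); last by rewrite !inE eqxx.
  by rewrite inE; apply/orP; right; apply: imset_f; rewrite inE.
have M1E : forall f, f \in M1 -> f \in edges r.
  move=> f /imsetP [g gM ->]; have [a [b [eab ->]]] := matching_edge mM0 gM.
  by apply/edgesP; exists (inl a), (inl b); split => //; rewrite imsetU1 imset_set1.
have M2E : forall f, f \in M2 -> f \in edges r.
  by move=> f /imsetP [x _ ->]; apply: pair_edge.
have mst : matching r (M1 :|: M2).
  apply/andP; split.
    by apply/subsetP => f /setUP [/M1E|/M2E].
  apply/trivIsetP => f1 f2 /setUP [] /imsetP [g1 g1M ->] /setUP [] /imsetP [g2 g2M ->] ne.
  - have ng : g1 != g2 by apply: contraNneq ne => ->.
    have := (trivIsetP tI0) g1 g2 g1M g2M ng.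
    rewrite -!setI_eq0 -imsetI; last by move=> ? ? _ _; apply: inl_inj.
    by move/eqP ->; rewrite imset0.
  - apply: disj_by => u /imsetP [w wg1 ->]; rewrite !inE /=.
    apply/negP => /orP [/eqP [wE]|/eqP //]; subst w; move: g2M; rewrite inE => /negP; apply.
    by apply/bigcupP; exists g1.
  - rewrite disjoint_sym; apply: disj_by => u /imsetP [w wg1 ->]; rewrite !inE /=.
    apply/negP => /orP [/eqP [wE]|/eqP //]; subst w; move: g1M; rewrite inE => /negP; apply.
    by apply/bigcupP; exists g2.
  - have ng : g1 != g2 by apply: contraNneq ne => ->.
    apply: disj_by => u; rewrite !inE => /orP [] /eqP ->.
      by apply/negP => /orP [/eqP [E]|/eqP //]; rewrite E eqxx in ng.
    by apply/negP => /orP [/eqP //|/eqP [E]]; rewrite E eqxx in ng.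
exists (M1 :|: M2).
  apply: cover_meet_maximal => // f /edge_has_inl [x xf].
  by exists (inl x).
have dis : M1 :&: M2 = set0.
  apply/setP => f; rewrite !inE; apply/negP => /andP [/imsetP [g _ ->] /imsetP [x _]].
  move/setP => /(_ (inr (x, o))); rewrite !inE eqxx orbT.
  by case/imsetP.
rewrite cardsU dis cards0 subn0.
rewrite card_imset; last by apply: imset_inj; apply: inl_inj.
rewrite card_imset // cardsCs setCK (card_cover_matching e_irr mM0).
have h := matching_number_le; rewrite -E0 in h *. exact: arith_help.
Qed.

End Corona.
Unset Implicit Arguments.

Lemma arith2 n k a : n = 2 * k -> k <= a -> 2 * a <= n -> n - a = n %/ 2.
Proof. move=> -> h1 h2; rewrite mulKn //; lia. Qed.

Lemma big_minn_le (I : finType) (P : pred I) (F : I -> nat) idx i :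
  P i -> \big[minn/idx]_(j | P j) F j <= F i.
Proof.
move=> Pi; rewrite -big_filter.
have : i \in filter P (index_enum I) by rewrite mem_filter Pi mem_index_enum.
elim: (filter P (index_enum I)) => [//|j s IH]; rewrite big_cons inE.
case/orP => [/eqP ->|/IH h]; first exact: geq_minl.
exact: leq_trans (geq_minr _ _) h.
Qed.

Theorem theorem2p2 (T : finType) (e : rel T) (m : nat)
    (e_sym : symmetric e) (e_irr : irreflexive e) (m_pos : 0 < m) :
  saturation_number (corona_rel e m)
    = matching_number e + (#|T| - 2 * matching_number e)
  /\ ((exists M : {set {set T}}, perfect_matching e M) ->
      saturation_number (corona_rel e m) = #|T| %/ 2).
Proof.
have le2 := matching_number_le e_irr.
have sat : saturation_number (corona_rel e m) = #|T| - matching_number e.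
  apply/eqP; rewrite eqn_leq; apply/andP; split.
    have [Ms maxs cs] := upper e_irr m_pos.
    rewrite /saturation_number -cs; exact: big_minn_le.
  rewrite /saturation_number.
  apply: (big_ind (fun x => #|T| - matching_number e <= x)).
  - rewrite card_sum; apply: leq_trans (leq_subr _ _) (leq_addr _ _).
  - by move=> x y hx hy; rewrite leq_min hx hy.
  - move=> M maxM; rewrite leq_subLR addnC. by have := lower m_pos maxM.
split; first by rewrite sat arith_help.
case=> M /andP [mM /eqP cov].
have h := card_cover_matching e_irr mM; rewrite cov cardsT in h.
have kle : #|M| <= matching_number e.
  exact: (@leq_bigmax_cond _ (fun M => matching e M)).
rewrite sat; exact: arith2 h kle le2.
Qed.
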